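(* The category $\mathcal{SG}$ of special groups is equivalent to the category $\mathcal{SMF}$ of special multifields, via the functors $G\mapsto M(G)=G\cup\{0\}$ and $F\mapsto F^\bullet=F\setminus\{0\}$.
   Context: A special group is $(G,-1,\equiv)$ with $G$ a group of exponent 2, $-1\in G$, $\equiv$ a relation on $G\times G$ satisfying: (SG0) equivalence relation; (SG1) $\langle a,b\rangle\equiv\langle b,a\rangle$; (SG2) $\langle a,-a\rangle\equiv\langle1,-1\rangle$ with $-a=(-1)a$; (SG3) $\langle a,b\rangle\equiv\langle c,d\rangle\Rightarrow ab=cd$; (SG4) $\langle a,b\rangle\equiv\langle c,d\rangle\Rightarrow\langle a,-c\rangle\equiv\langle -b,d\rangle$; (SG5) $\langle a,b\rangle\equiv\langle c,d\rangle\Rightarrow\langle ga,gb\rangle\equiv\langle gc,gd\rangle$; (SG6) the relation on $G^3$ given by $\langle a_1,a_2,a_3\rangle\equiv\langle b_1,b_2,b_3\rangle$ iff $\exists x,y,z$ with $\langle a_1,x\rangle\equiv\langle b_1,y\rangle$, $\langle a_2,a_3\rangle\equiv\langle x,z\rangle$, $\langle b_2,b_3\rangle\equiv\langle y,z\rangle$ is transitive. $D_G(a,b)=\{c:\exists d,\ \langle c,d\rangle\equiv\langle a,b\rangle\}$. Morphisms of special groups are group homomorphisms $f$ with $f(-1)=-1$ and $\langle a,b\rangle\equiv\langle c,d\rangle\Rightarrow\langle f(a),f(b)\rangle\equiv\langle f(c),f(d)\rangle$. $M(G)=G\cup\{0\}$ ($0$ new) with $a\cdot b=0$ if $a=0$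 or $b=0$, the product of $G$ otherwise; $-a=(-1)a$; $a+b=\{b\}$ if $a=0$, $\{a\}$ if $b=0$, $M(G)$ if $a=-b\ne0$, $D_G(a,b)$ otherwise. On morphisms, $M(f)$ extends $f$ by $0\mapsto0$. A multiring is a tuple $(R,+,\cdot,-,0,1)$ with $+:R\times R\to\mathcal P(R)\setminus\{\emptyset\}$ satisfying: $z\in x+y\Rightarrow x\in z+(-y)$ and $y\in(-x)+z$; $y\in0+x\iff y=x$; $+$ associative and commutative; $(R,\cdot,1)$ a commutative monoid; $a0=0$; $c\in a+b\Rightarrow cd\in ad+bd$; multifield: nonzero elements invertible; morphisms preserve $+$ (as $c\in a+b\Rightarrow f(c)\in f(a)+f(b)$), $-$, $0$, $\cdot$, $1$. A special multifield is a multifield $F$ such that, with $F^\bullet=F\setminus\{0\}$: (i) $a^2=1$ for $a\in F^\bullet$; (ii) $a+(-a)=F$ for $a\in F^\bullet$; (iii) $ab=cd$, $a\in c+d\Rightarrow c\in a+b$; (iv) $ab=cd=ef$, $a\in c+d$, $c\in e+f\Rightarrow a\in e+f$; (v) if there are $x,y,z\in F^\bullet$ with $ax=cy$, $a=xz$, $c=yz$, $a\in c+y$, $b\in x+z$, $d\in y+z$, then there are $t,v,w\in F^\bullet$ with $bt=cv$, $b=tw$, $c=vw$, $b\in c+v$, $a\in t+w$, $d\in v+w$ (all letters in $F^\bullet$). $F^\bullet$ is a special group with $\langle a,b\rangle\equiv\langle c,d\rangle$ iff $ab=cd$ and $a\in c+d$; morphisms are restricted. $\mathcal{SMF}$ has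 special multifields and multiring morphisms. *)

(* Defs.v *)
(* Data of a special group: carrier, product, unit 1, distinguished -1,
   and the binary-form isometry  sg_rel a b c d  :=  <a,b> == <c,d>. *)
Record SGdata := mkSG {
  sg_car : Type;
  sg_mul : sg_car -> sg_car -> sg_car;
  sg_one : sg_car;
  sg_m1  : sg_car;
  sg_rel : sg_car -> sg_car -> sg_car -> sg_car -> Prop
}.

Definition sg_neg (G : SGdata) (a : sg_car G) : sg_car G := sg_mul G (sg_m1 G) a.

(* <a1,a2,a3> == <b1,b2,b3> *)
Definition sg_rel3 (G : SGdata) (a1 a2 a3 b1 b2 b3 : sg_car G) : Prop :=
  exists x y z, sg_rel G a1 x b1 y /\ sg_rel G a2 a3 x z /\ sg_rel G b2 b3 y z.

Record is_special_group (G : SGdata) : Prop := {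
  sg_assoc : forall a b c, sg_mul G a (sg_mul G b c) = sg_mul G (sg_mul G a b) c;
  sg_mul1l : forall a, sg_mul G (sg_one G) a = a;
  sg_mul1r : forall a, sg_mul G a (sg_one G) = a;
  sg_exp2  : forall a, sg_mul G a a = sg_one G;
  sg_refl  : forall a b, sg_rel G a b a b;
  sg_sym   : forall a b c d, sg_rel G a b c d -> sg_rel G c d a b;
  sg_trans : forall a b c d e f, sg_rel G a b c d -> sg_rel G c d e f -> sg_rel G a b e f;
  sg_SG1 : forall a b, sg_rel G a b b a;
  sg_SG2 : forall a, sg_rel G a (sg_neg G a) (sg_one G) (sg_m1 G);
  sg_SG3 : forall a b c d, sg_rel G a b c d -> sg_mul G a b = sg_mul G c d;
  sg_SG4 : forall a b c d, sg_rel G a b c d -> sg_rel G a (sg_neg G c) (sg_neg G b) d;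
  sg_SG5 : forall a b c d g, sg_rel G a b c d ->
             sg_rel G (sg_mul G g a) (sg_mul G g b) (sg_mul G g c) (sg_mul G g d);
  sg_SG6 : forall a1 a2 a3 b1 b2 b3 c1 c2 c3,
             sg_rel3 G a1 a2 a3 b1 b2 b3 -> sg_rel3 G b1 b2 b3 c1 c2 c3 ->
             sg_rel3 G a1 a2 a3 c1 c2 c3
}.

Definition D_G (G : SGdata) (a b c : sg_car G) : Prop :=
  exists d, sg_rel G c d a b.

Definition is_sg_morphism (G H : SGdata) (f : sg_car G -> sg_car H) : Prop :=
  (forall a b, f (sg_mul G a b) = sg_mul H (f a) (f b)) /\
  f (sg_m1 G) = sg_m1 H /\
  (forall a b c d, sg_rel G a b c d -> sg_rel H (f a) (f b) (f c) (f d)).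

Definition sg_iso (G H : SGdata) (f : sg_car G -> sg_car H) : Prop :=
  is_sg_morphism G H f /\
  exists h : sg_car H -> sg_car G, is_sg_morphism H G h /\
    (forall x, h (f x) = x) /\ (forall y, f (h y) = y).

(* mr_add x y z  means  z \in x + y. *)
Record MRdata := mkMR {
  mr_car  : Type;
  mr_add  : mr_car -> mr_car -> mr_car -> Prop;
  mr_mul  : mr_car -> mr_car -> mr_car;
  mr_neg  : mr_car -> mr_car;
  mr_zero : mr_car;
  mr_one  : mr_car
}.

Record is_multiring (R : MRdata) : Prop := {
  mr_add_ne    : forall x y, exists z, mr_add R x y z;
  mr_add_rev   : forall x y z, mr_add R x y z ->
                   mr_add R z (mr_neg R y) x /\ mr_add R (mr_neg R x) z y;
  mr_add_0     : forall x y, mr_add R (mr_zero R) x y <-> y = x;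
  mr_add_assoc : forall x y z w,
                   (exists t, mr_add R x y t /\ mr_add R t z w) <->
                   (exists t, mr_add R y z t /\ mr_add R x t w);
  mr_add_comm  : forall x y z, mr_add R x y z <-> mr_add R y x z;
  mr_mul_assoc : forall a b c, mr_mul R a (mr_mul R b c) = mr_mul R (mr_mul R a b) c;
  mr_mul_comm  : forall a b, mr_mul R a b = mr_mul R b a;
  mr_mul_1     : forall a, mr_mul R (mr_one R) a = a;
  mr_mul_0     : forall a, mr_mul R a (mr_zero R) = mr_zero R;
  mr_distr     : forall a b c d, mr_add R a b c ->
                   mr_add R (mr_mul R a d) (mr_mul R b d) (mr_mul R c d)
}.

Record is_multifield (R : MRdata) : Prop := {
  mf_multiring : is_multiring R;
  mf_nontriv   : mr_one R <> mr_zero R;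
  mf_inv       : forall a, a <> mr_zero R -> exists b, mr_mul R a b = mr_one R
}.

Record is_special_multifield (F : MRdata) : Prop := {
  smf_multifield : is_multifield F;
  smf_i   : forall a, a <> mr_zero F -> mr_mul F a a = mr_one F;
  smf_ii  : forall a, a <> mr_zero F -> forall z, mr_add F a (mr_neg F a) z;
  smf_iii : forall a b c d, a <> mr_zero F -> b <> mr_zero F -> c <> mr_zero F ->
              d <> mr_zero F ->
              mr_mul F a b = mr_mul F c d -> mr_add F c d a -> mr_add F a b c;
  smf_iv  : forall a b c d e f, a <> mr_zero F -> b <> mr_zero F -> c <> mr_zero F ->
              d <> mr_zero F -> e <> mr_zero F -> f <> mr_zero F ->
              mr_mul F a b = mr_mul F c d -> mr_mul F c d = mr_mul F e f ->
              mr_add F c d a -> mr_add F e f c -> mr_add F e f a;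
  smf_v   : forall a b c d, a <> mr_zero F -> b <> mr_zero F -> c <> mr_zero F ->
              d <> mr_zero F ->
              (exists x y z, x <> mr_zero F /\ y <> mr_zero F /\ z <> mr_zero F /\
                 mr_mul F a x = mr_mul F c y /\ a = mr_mul F x z /\ c = mr_mul F y z /\
                 mr_add F c y a /\ mr_add F x z b /\ mr_add F y z d) ->
              (exists t v w, t <> mr_zero F /\ v <> mr_zero F /\ w <> mr_zero F /\
                 mr_mul F b t = mr_mul F c v /\ b = mr_mul F t w /\ c = mr_mul F v w /\
                 mr_add F c v b /\ mr_add F t w a /\ mr_add F v w d)
}.

Definition is_mr_morphism (R S : MRdata) (f : mr_car R -> mr_car S) : Prop :=
  (forall a b c, mr_add R a b c -> mr_add S (f a) (f b) (f c)) /\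
  (forall a, f (mr_neg R a) = mr_neg S (f a)) /\
  f (mr_zero R) = mr_zero S /\
  (forall a b, f (mr_mul R a b) = mr_mul S (f a) (f b)) /\
  f (mr_one R) = mr_one S.

Definition mr_iso (R S : MRdata) (f : mr_car R -> mr_car S) : Prop :=
  is_mr_morphism R S f /\
  exists h : mr_car S -> mr_car R, is_mr_morphism S R h /\
    (forall x, h (f x) = x) /\ (forall y, f (h y) = y).

(* The functor M : SG -> SMF  (0 is represented by None)               *)

Definition M_add (G : SGdata) (x y z : option (sg_car G)) : Prop :=
  match x, y with
  | None, _ => z = y
  | Some _, None => z = x
  | Some a, Some b =>
      a = sg_neg G b \/ (a <> sg_neg G b /\ exists c, z = Some c /\ D_G G a b c)
  end.

Definition M_mul (G : SGdata) (x y : option (sg_car G)) : option (sg_car G) :=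
  match x, y with
  | Some a, Some b => Some (sg_mul G a b)
  | _, _ => None
  end.

Definition M_neg (G : SGdata) (x : option (sg_car G)) : option (sg_car G) :=
  option_map (sg_neg G) x.

Definition MG (G : SGdata) : MRdata :=
  mkMR (option (sg_car G)) (M_add G) (M_mul G) (M_neg G) None (Some (sg_one G)).

Definition Mmap {A B : Type} (f : A -> B) : option A -> option B := option_map f.

Record nz_facts (R : MRdata) : Prop := {
  nz_one : mr_one R <> mr_zero R;
  nz_m1  : mr_neg R (mr_one R) <> mr_zero R;
  nz_mul : forall a b, a <> mr_zero R -> b <> mr_zero R -> mr_mul R a b <> mr_zero R
}.

Definition nzcar (R : MRdata) : Type := {x : mr_car R | x <> mr_zero R}.

Definition Fb (R : MRdata) (H : nz_facts R) : SGdata :=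
  mkSG (nzcar R)
    (fun a b => exist _ (mr_mul R (proj1_sig a) (proj1_sig b))
                  (nz_mul R H _ _ (proj2_sig a) (proj2_sig b)))
    (exist _ (mr_one R) (nz_one R H))
    (exist _ (mr_neg R (mr_one R)) (nz_m1 R H))
    (fun a b c d =>
       mr_mul R (proj1_sig a) (proj1_sig b) = mr_mul R (proj1_sig c) (proj1_sig d) /\
       mr_add R (proj1_sig c) (proj1_sig d) (proj1_sig a)).

Definition Fb_map (R S : MRdata) (g : mr_car R -> mr_car S)
  (Hnz : forall a, a <> mr_zero R -> g a <> mr_zero S) : nzcar R -> nzcar S :=
  fun a => exist _ (g (proj1_sig a)) (Hnz _ (proj2_sig a)).

Lemma Some_not_None {A : Type} (x : A) : Some x <> None.
Proof. discriminate. Qed.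

Definition eta (G : SGdata) (x : sg_car G) : nzcar (MG G) :=
  exist _ (Some x) (Some_not_None x).

Definition eps (F : MRdata) (x : option (nzcar F)) : mr_car F :=
  match x with
  | None => mr_zero F
  | Some a => proj1_sig a
  end.

Definition M_is_functor : Prop :=
  (forall G, is_special_group G -> is_special_multifield (MG G)) /\
  (forall G H (f : sg_car G -> sg_car H),
     is_special_group G -> is_special_group H -> is_sg_morphism G H f ->
     is_mr_morphism (MG G) (MG H) (Mmap f)) /\
  (forall (A : Type) (x : option A), Mmap (fun a => a) x = x) /\
  (forall (A B C : Type) (f : A -> B) (g : B -> C) x,
     Mmap (fun a => g (f a)) x = Mmap g (Mmap f x)).

Definition bullet_is_functor : Prop :=
  (forall F, is_special_multifield F ->
     nz_facts F /\ forall HF : nz_facts F, is_special_group (Fb F HF)) /\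
  (forall F K (g : mr_car F -> mr_car K),
     is_special_multifield F -> is_special_multifield K -> is_mr_morphism F K g ->
     (forall a, a <> mr_zero F -> g a <> mr_zero K) /\
     forall (HF : nz_facts F) (HK : nz_facts K) Hnz,
       is_sg_morphism (Fb F HF) (Fb K HK) (Fb_map F K g Hnz)) /\
  (forall F Hnz (x : nzcar F), Fb_map F F (fun a => a) Hnz x = x) /\
  (forall F K L (f : mr_car F -> mr_car K) (g : mr_car K -> mr_car L) Hf Hg Hgf
          (x : nzcar F),
     Fb_map F L (fun a => g (f a)) Hgf x = Fb_map K L g Hg (Fb_map F K f Hf x)).

Definition eta_natural_iso : Prop :=
  forall G, is_special_group G ->
    (forall HM : nz_facts (MG G), sg_iso G (Fb (MG G) HM) (eta G)) /\
    (forall H (f : sg_car G -> sg_car H), is_special_group H -> is_sg_morphism G H f ->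
       forall Hnz x,
         eta H (f x) = Fb_map (MG G) (MG H) (Mmap f) Hnz (eta G x)).

Definition eps_natural_iso : Prop :=
  forall F, is_special_multifield F ->
    (forall HF : nz_facts F, mr_iso (MG (Fb F HF)) F (eps F)) /\
    (forall K (g : mr_car F -> mr_car K), is_special_multifield K ->
       is_mr_morphism F K g ->
       forall Hnz (x : option (nzcar F)),
         g (eps F x) = eps K (Mmap (Fb_map F K g Hnz) x)).

(* Main.v *)
Require Import Defs.
From Stdlib Require Import Classical ClassicalEpsilon ProofIrrelevance.

Module P1.

Section SGlemmas.
Variable G : SGdata.
Hypothesis HG : is_special_group G.
Local Infix "**" := (sg_mul G) (at level 40, left associativity).
Local Notation rel := (sg_rel G).
Local Notation ng := (sg_neg G).
Local Notation one := (sg_one G).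
Local Notation m1 := (sg_m1 G).

Lemma gA a b c : a ** (b ** c) = a ** b ** c.
Proof. apply (sg_assoc G HG). Qed.
Lemma g1l a : one ** a = a. Proof. apply (sg_mul1l G HG). Qed.
Lemma g1r a : a ** one = a. Proof. apply (sg_mul1r G HG). Qed.
Lemma gxx a : a ** a = one. Proof. apply (sg_exp2 G HG). Qed.
Lemma gK a b : a ** (a ** b) = b.
Proof. rewrite gA, gxx, g1l; reflexivity. Qed.
Lemma gKr a b : b ** a ** a = b.
Proof. rewrite <- gA, gxx, g1r; reflexivity. Qed.
Lemma gcancel a b c : a ** b = a ** c -> b = c.
Proof. intro H. rewrite <- (gK a b), <- (gK a c), H; reflexivity. Qed.
Lemma gC a b : a ** b = b ** a.
Proof.
  apply (gcancel (a ** b)). rewrite gxx.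
  rewrite gA, <- (gA a b b), gxx, g1r, gxx. reflexivity.
Qed.
Lemma gCA a b c : a ** (b ** c) = b ** (a ** c).
Proof. rewrite !gA, (gC a b); reflexivity. Qed.
Lemma negneg a : ng (ng a) = a.
Proof. unfold sg_neg. apply gK. Qed.
Lemma neg_mul a b : ng a ** b = ng (a ** b).
Proof. unfold sg_neg. rewrite gA; reflexivity. Qed.
Lemma mul_neg a b : a ** ng b = ng (a ** b).
Proof. unfold sg_neg. apply gCA. Qed.

Lemma rrefl a b : rel a b a b. Proof. apply (sg_refl G HG). Qed.
Lemma rsym a b c d : rel a b c d -> rel c d a b. Proof. apply (sg_sym G HG). Qed.
Lemma rtrans a b c d e f : rel a b c d -> rel c d e f -> rel a b e f.
Proof. apply (sg_trans G HG). Qed.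
Lemma r1 a b : rel a b b a. Proof. apply (sg_SG1 G HG). Qed.
Lemma r2 a : rel a (ng a) one m1. Proof. apply (sg_SG2 G HG). Qed.
Lemma r3 a b c d : rel a b c d -> a ** b = c ** d. Proof. apply (sg_SG3 G HG). Qed.
Lemma r4 a b c d : rel a b c d -> rel a (ng c) (ng b) d. Proof. apply (sg_SG4 G HG). Qed.
Lemma r5 g a b c d : rel a b c d -> rel (g**a) (g**b) (g**c) (g**d).
Proof. intro; apply (sg_SG5 G HG); assumption. Qed.
Lemma r6 a1 a2 a3 b1 b2 b3 c1 c2 c3 :
  sg_rel3 G a1 a2 a3 b1 b2 b3 -> sg_rel3 G b1 b2 b3 c1 c2 c3 -> sg_rel3 G a1 a2 a3 c1 c2 c3.
Proof. apply (sg_SG6 G HG). Qed.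

Lemma rswapl a b c d : rel a b c d -> rel b a c d.
Proof. intro H. eapply rtrans; [apply r1| exact H]. Qed.
Lemma rswapr a b c d : rel a b c d -> rel a b d c.
Proof. intro H. eapply rtrans; [exact H| apply r1]. Qed.

Lemma D_full a t : D_G G a (ng a) t.
Proof. exists (ng t). eapply rtrans; [apply r2| apply rsym, r2]. Qed.

Lemma rel_of a b c d : a ** b = c ** d -> (c = ng d \/ D_G G c d a) -> rel a b c d.
Proof.
  intros E [Hc | [e He]].
  - assert (Hd : d = ng c) by (rewrite Hc, negneg; reflexivity).
    subst d. assert (E2 : c ** ng c = m1).
    { rewrite mul_neg, gxx. unfold sg_neg. apply g1r. }
    rewrite E2 in E. assert (b = ng a).
    { rewrite <- (gK a b), E. unfold sg_neg. apply gC. }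
    subst b. eapply rtrans; [apply r2| apply rsym, r2].
  - pose proof (r3 _ _ _ _ He) as E'. rewrite <- E in E'.
    apply gcancel in E'. subst e. exact He.
Qed.

Lemma D_rel a b c d : rel a b c d -> D_G G c d a.
Proof. intro H; exists b; exact H. Qed.

Lemma D_rev1 a b c : D_G G a b c -> D_G G c (ng b) a.
Proof.
  intros [d H]. exists (ng d). apply rswapr. apply r4. apply rswapr. apply rsym. exact H.
Qed.
Lemma D_rev2 a b c : D_G G a b c -> D_G G (ng a) c b.
Proof.
  intros [d H]. exists (ng d). apply r4. apply rswapl. apply rswapr. apply rsym. exact H.
Qed.
Lemma D_comm a b c : D_G G a b c -> D_G G b a c.
Proof. intros [d H]. exists d. apply rswapr. exact H. Qed.
Lemma D_self a b : D_G G a b a.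
Proof. exists b. apply rrefl. Qed.
Lemma D_scale g a b c : D_G G a b c -> D_G G (g**a) (g**b) (g**c).
Proof. intros [d H]. exists (g**d). apply r5. exact H. Qed.

Lemma D_negrev a b c : D_G G a b (ng c) -> D_G G b c (ng a).
Proof.
  intros [e H].
  apply rsym in H.
  apply (r5 m1) in H. fold (ng a) (ng b) (ng (ng c)) (ng e) in H.
  rewrite negneg in H. apply rswapr in H. apply r4 in H. rewrite !negneg in H.
  exists e. exact H.
Qed.

Local Notation R3 := (sg_rel3 G).
Lemma R3_E12 a1 a2 a3 b1 b2 : rel a1 a2 b1 b2 -> R3 a1 a2 a3 b1 b2 a3.
Proof. intro H. exists a2, b2, a3. repeat split; try apply rrefl; exact H. Qed.
Lemma R3_swap23 a1 a2 a3 : R3 a1 a2 a3 a1 a3 a2.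
Proof. exists a2, a2, a3. repeat split; try apply rrefl. apply r1. Qed.

Lemma D_assoc a b c t w : D_G G a b t -> D_G G t c w ->
  exists s, D_G G b c s /\ D_G G a s w.
Proof.
  intros [e He] [f Hf].
  assert (H1 : R3 a b c t e c) by (apply R3_E12, rsym, He).
  assert (H2 : R3 t c e w f e) by (apply R3_E12, rsym, Hf).
  pose proof (r6 _ _ _ _ _ _ _ _ _ (r6 _ _ _ _ _ _ _ _ _ H1 (R3_swap23 t e c)) H2) as H3.
  destruct H3 as (x & y & z & Hx & Hy & Hz).
  exists x. split.
  - exists z. apply rsym. exact Hy.
  - exists y. apply rsym. exact Hx.
Qed.

End SGlemmas.

End P1.
Import P1.

Module P2.

Section MGproof.
Variable G : SGdata.
Hypothesis HG : is_special_group G.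
Local Infix "**" := (sg_mul G) (at level 40, left associativity).
Local Notation rel := (sg_rel G).
Local Notation ng := (sg_neg G).
Local Notation one := (sg_one G).
Local Notation m1 := (sg_m1 G).
Local Notation Ma := (M_add G).

Lemma Ma_SSS a b c : Ma (Some a) (Some b) (Some c) <-> D_G G a b c.
Proof.
  simpl. split.
  - intros [E | [_ [c' [E D]]]].
    + subst a. apply D_comm; [assumption|]. apply D_full; assumption.
    + injection E; intros; subst; assumption.
  - intro D. destruct (classic (a = ng b)) as [E|E]; [left; assumption|].
    right. split; [assumption|]. exists c. split; auto.
Qed.
Lemma Ma_SSN a b : Ma (Some a) (Some b) None <-> a = ng b.
Proof.
  simpl. split.
  - intros [E | [_ [c' [E _]]]]; [assumption| discriminate].
  - intro; left; assumption.
Qed.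
Lemma Ma_0l y w : Ma None y w <-> w = y.
Proof. simpl. tauto. Qed.
Lemma Ma_0r x w : Ma x None w <-> w = x.
Proof. destruct x; simpl; tauto. Qed.

Lemma Ma_comm x y z : Ma x y z -> Ma y x z.
Proof.
  destruct x as [a|], y as [b|]; try (simpl; tauto).
  destruct z as [c|].
  - rewrite !Ma_SSS. apply D_comm; assumption.
  - rewrite !Ma_SSN. intro E; subst a. rewrite negneg; auto.
Qed.

Lemma Ma_assoc1 x y z w : (exists t, Ma x y t /\ Ma t z w) -> (exists t, Ma y z t /\ Ma x t w).
Proof.
  intros [t [H1 H2]].
  destruct x as [a|].
  2:{ apply (proj1 (Ma_0l _ _)) in H1. subst t. exists w. split; [assumption| apply (proj2 (Ma_0l _ _)); reflexivity]. }
  destruct y as [b|].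
  2:{ apply (proj1 (Ma_0r _ _)) in H1. subst t. exists z. split; [apply (proj2 (Ma_0l _ _)); reflexivity| assumption]. }
  destruct z as [c|].
  2:{ apply (proj1 (Ma_0r _ _)) in H2. subst w. exists (Some b). split; [apply (proj2 (Ma_0r _ _)); reflexivity| assumption]. }
  destruct t as [t|].
  - apply (proj1 (Ma_SSS _ _ _)) in H1. destruct w as [w|].
    + apply (proj1 (Ma_SSS _ _ _)) in H2. destruct (D_assoc G HG _ _ _ _ _ H1 H2) as [s [Hs1 Hs2]].
      exists (Some s). split; apply (proj2 (Ma_SSS _ _ _)); assumption.
    + apply (proj1 (Ma_SSN _ _)) in H2. subst t. exists (Some (ng a)). split.
      * apply (proj2 (Ma_SSS _ _ _)). apply D_negrev; assumption.
      * apply (proj2 (Ma_SSN _ _)). rewrite negneg; auto.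
  - apply (proj1 (Ma_SSN _ _)) in H1. apply (proj1 (Ma_0l _ _)) in H2. subst w a.
    exists (Some b). split; apply (proj2 (Ma_SSS _ _ _)); [apply D_self; auto| apply D_comm; auto; apply D_full; auto].
Qed.

Lemma Ma_assoc x y z w : (exists t, Ma x y t /\ Ma t z w) <-> (exists t, Ma y z t /\ Ma x t w).
Proof.
  split; [apply Ma_assoc1|].
  intros [t [H1 H2]].
  destruct (Ma_assoc1 z y x w) as [s [Hs1 Hs2]].
  - exists t. split; apply Ma_comm; assumption.
  - exists s. split; apply Ma_comm; assumption.
Qed.

Lemma Ma_rev x y z : Ma x y z -> Ma z (M_neg G y) x /\ Ma (M_neg G x) z y.
Proof.
  destruct x as [a|].
  2:{ intro H; apply (proj1 (Ma_0l _ _)) in H; subst z. split.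
    - destruct y as [b|]; simpl; [left; rewrite negneg; auto| auto].
    - apply (proj2 (Ma_0l _ _)); reflexivity. }
  destruct y as [b|].
  2:{ intro H; apply (proj1 (Ma_0r _ _)) in H; subst z. split.
    - apply (proj2 (Ma_0r _ _)); reflexivity.
    - simpl. left. reflexivity. }
  destruct z as [c|].
  - intro H. apply (proj1 (Ma_SSS _ _ _)) in H. simpl M_neg. split; apply (proj2 (Ma_SSS _ _ _)).
    + apply D_rev1; auto.
    + apply D_rev2; auto.
  - intro H. apply (proj1 (Ma_SSN _ _)) in H. subst a. simpl M_neg. split.
    + apply (proj2 (Ma_0l _ _)). reflexivity.
    + apply (proj2 (Ma_0r _ _)). rewrite negneg; auto.
Qed.

Lemma MG_multiring : is_multiring (MG G).
Proof.
  constructor; simpl.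
  - intros [a|] [b|]; try (eexists; simpl; reflexivity).
    exists (Some a). apply (proj2 (Ma_SSS _ _ _)). apply D_self; auto.
  - apply Ma_rev.
  - intros; tauto.
  - apply Ma_assoc.
  - intros; split; apply Ma_comm.
  - intros [a|] [b|] [c|]; simpl; auto. rewrite gA; auto.
  - intros [a|] [b|]; simpl; auto. rewrite gC; auto.
  - intros [a|]; simpl; auto. rewrite g1l; auto.
  - intros [a|]; simpl; auto.
  - intros x y z [d|].
    2:{ destruct x, y, z; simpl; auto. }
    destruct x as [a|].
    2:{ intro H; apply (proj1 (Ma_0l _ _)) in H; subst z. apply (proj2 (Ma_0l _ _)). reflexivity. }
    destruct y as [b|].
    { destruct z as [c|].
      - intro H. apply (proj1 (Ma_SSS _ _ _)) in H. simpl. apply (proj2 (Ma_SSS _ _ _)).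
        rewrite (gC G HG a), (gC G HG b), (gC G HG c). apply D_scale; auto.
      - intro H. apply (proj1 (Ma_SSN _ _)) in H. subst a. simpl. apply (proj2 (Ma_SSN _ _)).
        rewrite neg_mul; auto. }
    intro H; apply (proj1 (Ma_0r _ _)) in H; subst z. simpl. reflexivity.
Qed.

Lemma relM a b c d : (Some (a ** b) = Some (c ** d) /\ Ma (Some c) (Some d) (Some a)) <-> rel a b c d.
Proof.
  split.
  - intros [E H]. injection E; intro E'. apply (proj1 (Ma_SSS _ _ _)) in H.
    apply rel_of; auto.
  - intro H. split.
    + f_equal. apply r3; auto.
    + apply (proj2 (Ma_SSS _ _ _)). apply D_rel with b; auto.
Qed.

Ltac nz x := let y := fresh x in destruct x as [y|]; [|congruence]; rename y into x.

Theorem MG_special : is_special_multifield (MG G).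
Proof.
  constructor.
  - constructor.
    + apply MG_multiring.
    + simpl; discriminate.
    + intros [a|] H; [|simpl in H; congruence]. exists (Some a). simpl. rewrite gxx; auto.
  - intros [a|] H; simpl in *; [|congruence]. rewrite gxx; auto.
  - intros [a|] H z; simpl in *; [|congruence]. left. rewrite negneg; auto.
  - simpl. intros a b c d Ha Hb Hc Hd. nz a. nz b. nz c. nz d.
    intros E H. assert (R : rel a b c d) by (apply (proj1 (relM _ _ _ _)); split; auto).
    apply (proj2 (Ma_SSS _ _ _)). apply D_rel with d. apply rsym; auto.
  - simpl. intros a b c d e f Ha Hb Hc Hd He Hf. nz a. nz b. nz c. nz d. nz e. nz f.
    intros E1 E2 H1 H2.
    assert (R1 : rel a b c d) by (apply (proj1 (relM _ _ _ _)); split; auto).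
    assert (R2 : rel c d e f) by (apply (proj1 (relM _ _ _ _)); split; auto).
    apply (proj2 (Ma_SSS _ _ _)). apply D_rel with b. apply rtrans with c d; auto.
  - simpl. intros a b c d Ha Hb Hc Hd. nz a. nz b. nz c. nz d.
    intros (x & y & z & Hx & Hy & Hz & E1 & E2 & E3 & H1 & H2 & H3).
    nz x. nz y. nz z.
    simpl in E1, E2, E3. injection E2; intro E2'. injection E3; intro E3'.
    assert (R1 : rel a x c y) by (apply (proj1 (relM _ _ _ _)); split; auto).
    assert (R2 : rel b (b ** a) x z).
    { apply rel_of; auto. rewrite gK; auto. right. apply (proj1 (Ma_SSS _ _ _)); auto. }
    assert (R3' : rel d (d ** c) y z).
    { apply rel_of; auto. rewrite gK; auto. right. apply (proj1 (Ma_SSS _ _ _)); auto. }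
    assert (T1 : sg_rel3 G a b (b ** a) c d (d ** c)) by (exists x, y, z; auto).
    assert (T0 : sg_rel3 G b a (a ** b) a b (b ** a)).
    { exists a, b, (a ** b). repeat split.
      - apply r1; auto.
      - apply rrefl; auto.
      - rewrite (gC G HG b a). apply rrefl; auto. }
    destruct (r6 G HG _ _ _ _ _ _ _ _ _ T0 T1) as (t & v & w & S1 & S2 & S3).
    exists (Some t), (Some v), (Some w).
    pose proof (r3 G HG _ _ _ _ S1) as F1.
    pose proof (r3 G HG _ _ _ _ S2) as F2. rewrite gK in F2; auto.
    pose proof (r3 G HG _ _ _ _ S3) as F3. rewrite gK in F3; auto.
    simpl. repeat split; try discriminate; try (f_equal; auto).
    + apply (proj2 (Ma_SSS _ _ _)), D_rel with t; auto.
    + apply (proj2 (Ma_SSS _ _ _)), D_rel with (a ** b); auto.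
    + apply (proj2 (Ma_SSS _ _ _)), D_rel with (d ** c); auto.
Qed.

End MGproof.

End P2.
Import P2.

Module P3.

Lemma sig_ext {A : Type} {P : A -> Prop} (x y : {a | P a}) :
  proj1_sig x = proj1_sig y -> x = y.
Proof. destruct x, y; simpl; intros; subst; f_equal; apply proof_irrelevance. Qed.

Lemma M_morph G H (f : sg_car G -> sg_car H) :
  is_special_group G -> is_special_group H -> is_sg_morphism G H f ->
  is_mr_morphism (MG G) (MG H) (Mmap f).
Proof.
  intros HG HH [fmul [fm1 frel]].
  assert (fneg : forall a, f (sg_neg G a) = sg_neg H (f a)).
  { intro a. unfold sg_neg. rewrite fmul, fm1. reflexivity. }
  split; [|split; [|split; [|split]]]; simpl.
  - intros [a|] [b|] z H1; simpl in *.
    + destruct z as [c|].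
      * apply (proj2 (Ma_SSS H HH _ _ _)). apply (proj1 (Ma_SSS G HG _ _ _)) in H1.
        destruct H1 as [d Hd]. exists (f d). apply frel; auto.
      * apply (proj2 (Ma_SSN H _ _)). apply (proj1 (Ma_SSN G _ _)) in H1.
        subst a. apply fneg.
    + subst z. reflexivity.
    + subst z. reflexivity.
    + subst z. reflexivity.
  - intros [a|]; simpl; auto. rewrite fneg; auto.
  - reflexivity.
  - intros [a|] [b|]; simpl; auto. rewrite fmul; auto.
  - f_equal. rewrite <- (sg_exp2 H HH (f (sg_one G))), <- fmul, (sg_mul1l G HG). reflexivity.
Qed.

Lemma M_functor : M_is_functor.
Proof.
  split; [|split; [|split]].
  - apply MG_special.
  - intros G H f HG HH Hf. apply M_morph; auto.
  - intros A [x|]; reflexivity.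
  - intros A B C f g [x|]; reflexivity.
Qed.

Lemma eta_iso : eta_natural_iso.
Proof.
  intros G HG. split.
  - intro HM. split.
    + split; [|split].
      * intros a b. apply sig_ext. reflexivity.
      * apply sig_ext. simpl. unfold sg_neg. rewrite (sg_mul1r G HG). reflexivity.
      * intros a b c d R. simpl. apply (proj2 (relM G HG _ _ _ _)). exact R.
    + exists (fun y => match proj1_sig y with Some x => x | None => sg_one G end).
      split; [split; [|split]|split].
      * intros [[a|] Ha] [[b|] Hb]; simpl in *; try congruence; reflexivity.
      * simpl. apply (sg_mul1r G HG).
      * intros [[a|] Ha] [[b|] Hb] [[c|] Hc] [[d|] Hd]; simpl in *; try congruence.
        intro R. apply (proj1 (relM G HG _ _ _ _)). exact R.
      * intro; reflexivity.
      * intros [[a|] Ha]; [|simpl in Ha; congruence]. apply sig_ext. reflexivity.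
  - intros H f HH Hf Hnz x. apply sig_ext. reflexivity.
Qed.

End P3.
Import P3.

Module P4.

(* Generic: SG6 from a swap axiom *)
Section Gen.
Variable G : SGdata.
Local Infix "**" := (sg_mul G) (at level 40, left associativity).
Local Notation rel := (sg_rel G).
Local Notation R3 := (sg_rel3 G).
Hypothesis gA : forall a b c, a ** (b ** c) = a ** b ** c.
Hypothesis g1l : forall a, sg_one G ** a = a.
Hypothesis g1r : forall a, a ** sg_one G = a.
Hypothesis gxx : forall a, a ** a = sg_one G.
Hypothesis rrefl : forall a b, rel a b a b.
Hypothesis rsym : forall a b c d, rel a b c d -> rel c d a b.
Hypothesis rtrans : forall a b c d e f, rel a b c d -> rel c d e f -> rel a b e f.
Hypothesis r1 : forall a b, rel a b b a.
Hypothesis r3 : forall a b c d, rel a b c d -> a ** b = c ** d.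
Hypothesis r5 : forall g a b c d, rel a b c d -> rel (g**a) (g**b) (g**c) (g**d).
Hypothesis Hv : forall a b c d, R3 a b (b**a) c d (d**c) -> R3 b a (a**b) c d (d**c).

Lemma gK' a b : a ** (a ** b) = b.
Proof. rewrite gA, gxx, g1l; reflexivity. Qed.
Lemma gcancel' a b c : a ** b = a ** c -> b = c.
Proof. intro H. rewrite <- (gK' a b), <- (gK' a c), H; reflexivity. Qed.
Lemma gC' a b : a ** b = b ** a.
Proof.
  apply (gcancel' (a ** b)). rewrite gxx.
  rewrite gA, <- (gA a b b), gxx, g1r, gxx. reflexivity.
Qed.

Lemma R3sym a1 a2 a3 b1 b2 b3 : R3 a1 a2 a3 b1 b2 b3 -> R3 b1 b2 b3 a1 a2 a3.
Proof. intros (x&y&z&H1&H2&H3). exists y, x, z. auto. Qed.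
Lemma R3disc a1 a2 a3 b1 b2 b3 : R3 a1 a2 a3 b1 b2 b3 -> a1 ** a2 ** a3 = b1 ** b2 ** b3.
Proof.
  intros (x&y&z&H1&H2&H3). apply r3 in H1, H2, H3.
  rewrite <- !gA, H2, H3, !gA, H1. reflexivity.
Qed.
Lemma R3scale g a1 a2 a3 b1 b2 b3 : R3 a1 a2 a3 b1 b2 b3 ->
  R3 (g**a1) (g**a2) (g**a3) (g**b1) (g**b2) (g**b3).
Proof. intros (x&y&z&H1&H2&H3). exists (g**x), (g**y), (g**z). auto. Qed.

Lemma swap12L a1 a2 a3 c1 c2 c3 : R3 a1 a2 a3 c1 c2 c3 -> R3 a2 a1 a3 c1 c2 c3.
Proof.
  intro H. pose proof (R3disc _ _ _ _ _ _ H) as Hd.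
  set (g := a1 ** a2 ** a3).
  apply (R3scale g) in H.
  assert (E1 : g ** a3 = (g ** a2) ** (g ** a1)).
  { unfold g. rewrite <- (gA (a1 ** a2) a3 a3), gxx, g1r.
    rewrite (gC' (a1 ** a2 ** a3) a2), gA, <- (gA _ (a1**a2**a3) (a1**a2**a3)), gxx, g1r.
    apply gC'. }
  assert (E2 : g ** c3 = (g ** c2) ** (g ** c1)).
  { unfold g. rewrite Hd. rewrite <- (gA (c1 ** c2) c3 c3), gxx, g1r.
    rewrite (gC' (c1 ** c2 ** c3) c2), gA, <- (gA _ (c1**c2**c3) (c1**c2**c3)), gxx, g1r.
    apply gC'. }
  rewrite E1, E2 in H. apply Hv in H.
  rewrite <- (gC' (g ** a2) (g ** a1)), <- E1, <- E2 in H.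
  apply (R3scale g) in H. rewrite !gK' in H. exact H.
Qed.
Lemma swap23L a1 a2 a3 c1 c2 c3 : R3 a1 a2 a3 c1 c2 c3 -> R3 a1 a3 a2 c1 c2 c3.
Proof.
  intros (x&y&z&H1&H2&H3). exists x, y, z. split; auto. split; auto.
  eapply rtrans; [apply r1| exact H2].
Qed.
Lemma swap12R a1 a2 a3 c1 c2 c3 : R3 a1 a2 a3 c1 c2 c3 -> R3 a1 a2 a3 c2 c1 c3.
Proof. intro H. apply R3sym, swap12L, R3sym, H. Qed.
Lemma swap23R a1 a2 a3 c1 c2 c3 : R3 a1 a2 a3 c1 c2 c3 -> R3 a1 a2 a3 c1 c3 c2.
Proof. intro H. apply R3sym, swap23L, R3sym, H. Qed.

Lemma R3trans a1 a2 a3 b1 b2 b3 c1 c2 c3 :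
  R3 a1 a2 a3 b1 b2 b3 -> R3 b1 b2 b3 c1 c2 c3 -> R3 a1 a2 a3 c1 c2 c3.
Proof.
  intros (x&y&z&H1&H2&H3) (x'&y'&z'&H1'&H2'&H3').
  assert (K : R3 z x a1 z' y' c1).
  { exists y, x', b1. split; [|split].
    - apply rtrans with y z; [apply r1|]. apply rtrans with b2 b3; [apply rsym; auto|].
      apply rtrans with x' z'; auto; apply r1.
    - apply rtrans with a1 x; [apply r1|]. apply rtrans with b1 y; auto; apply r1.
    - apply rtrans with c1 y'; [apply r1|]. apply rsym. apply rtrans with b1 x'; auto; apply r1. }
  apply swap12L, swap23L, swap12L, swap12R, swap23R, swap12R in K.
  destruct K as (X&Y&Z&K1&K2&K3).
  exists X, Y, Z. split; [auto|split].
  - apply rtrans with x z; auto.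
  - apply rtrans with y' z'; auto.
Qed.
End Gen.

End P4.
Import P4.

Module P5.

Section Raw.
Variable F : MRdata.
Hypothesis HF : is_special_multifield F.
Local Notation add := (mr_add F).
Local Infix "*" := (mr_mul F).
Local Notation ng := (mr_neg F).
Local Notation z0 := (mr_zero F).
Local Notation o := (mr_one F).

Let HM : is_multiring F := mf_multiring F (smf_multifield F HF).

Lemma fA a b c : a * (b * c) = a * b * c. Proof. apply (mr_mul_assoc F HM). Qed.
Lemma fC a b : a * b = b * a. Proof. apply (mr_mul_comm F HM). Qed.
Lemma f1l a : o * a = a. Proof. apply (mr_mul_1 F HM). Qed.
Lemma f1r a : a * o = a. Proof. rewrite fC; apply f1l. Qed.
Lemma f0r a : a * z0 = z0. Proof. apply (mr_mul_0 F HM). Qed.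
Lemma f0l a : z0 * a = z0. Proof. rewrite fC; apply f0r. Qed.
Lemma fCA a b c : a * (b * c) = b * (a * c). Proof. rewrite !fA, (fC a b); reflexivity. Qed.
Lemma fAC a b c : a * b * c = a * c * b. Proof. rewrite <- !fA, (fC b c); reflexivity. Qed.
Lemma addC x y z : add x y z -> add y x z. Proof. apply (mr_add_comm F HM). Qed.
Lemma add0 x y : add z0 x y <-> y = x. Proof. apply (mr_add_0 F HM). Qed.
Lemma addrev1 x y z : add x y z -> add z (ng y) x. Proof. apply (mr_add_rev F HM). Qed.
Lemma addrev2 x y z : add x y z -> add (ng x) z y. Proof. apply (mr_add_rev F HM). Qed.
Lemma distr a b c d : add a b c -> add (a * d) (b * d) (c * d). Proof. apply (mr_distr F HM). Qed.

Lemma add0x x : add z0 x x. Proof. apply (proj2 (add0 x x)); reflexivity. Qed.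
Lemma addx0 x : add x z0 x. Proof. apply addC, add0x. Qed.
Lemma negneg x : ng (ng x) = x.
Proof.
  pose proof (addrev1 _ _ _ (add0x x)) as H.
  apply addrev1 in H. apply (proj1 (add0 _ _)) in H.
  symmetry; exact H.
Qed.
Lemma neg0 : ng z0 = z0.
Proof.
  pose proof (addrev1 _ _ _ (add0x z0)) as H. apply (proj1 (add0 _ _)) in H. symmetry; exact H.
Qed.
Lemma add_zero_neg x y : add x y z0 -> y = ng x.
Proof. intro H. apply addrev2 in H. apply addC in H. apply (proj1 (add0 _ _)) in H. exact H. Qed.
Lemma negmul x : ng o * x = ng x.
Proof.
  pose proof (addrev1 _ _ _ (add0x o)) as H.
  apply (distr _ _ _ x) in H. rewrite f1l, f0l in H. apply add_zero_neg. exact H.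
Qed.
Lemma mulneg x y : x * ng y = ng (x * y).
Proof. rewrite <- (negmul y), <- (negmul (x * y)), fCA. reflexivity. Qed.
Lemma negadd x y z : add x y z -> add (ng x) (ng y) (ng z).
Proof. intro H. apply (distr _ _ _ (ng o)) in H. rewrite (fC x (ng o)), (fC y (ng o)), (fC z (ng o)), !negmul in H. exact H. Qed.

Lemma sq a : a <> z0 -> a * a = o. Proof. apply (smf_i F HF). Qed.
Lemma fK a b : a <> z0 -> a * (a * b) = b. Proof. intro. rewrite fA, sq, f1l; auto. Qed.
Lemma nzmul a b : a <> z0 -> b <> z0 -> a * b <> z0.
Proof. intros Ha Hb E. apply Ha. rewrite <- (f1r a), <- (sq b), fA, E, f0l; auto. Qed.
Lemma one_nz : o <> z0. Proof. apply (mf_nontriv F (smf_multifield F HF)). Qed.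
Lemma nzneg a : a <> z0 -> ng a <> z0.
Proof. intros Ha E. apply Ha. rewrite <- (negneg a), E, neg0. reflexivity. Qed.
Lemma self_add a b : a <> z0 -> b <> z0 -> add a b a.
Proof.
  intros Ha Hb. pose proof (smf_ii F HF a Ha b) as H. apply addrev1 in H.
  rewrite negneg in H. apply addC; exact H.
Qed.

Lemma nzF : nz_facts F.
Proof.
  constructor.
  - apply one_nz.
  - apply nzneg, one_nz.
  - apply nzmul.
Qed.

Section FbS.
Variable HN : nz_facts F.
Local Notation FB := (Fb F HN).
Local Infix "**" := (sg_mul FB) (at level 40, left associativity).
Local Notation rel := (sg_rel FB).

Lemma ac_eq a b c d : a <> z0 -> b <> z0 -> c <> z0 -> d <> z0 -> a * b = c * d -> a * c = b * d.
Proof.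
  intros Ha Hb Hc Hd E.
  transitivity ((a * b) * (b * c)).
  - rewrite <- fA, (fK b); auto.
  - rewrite E, <- fA, (fC b c), (fCA d c b), (fK c); auto. apply fC.
Qed.
Lemma gg g a b : g <> z0 -> (g * a) * (g * b) = a * b.
Proof. intro. rewrite <- fA, (fCA a g b), fK; auto. Qed.

Lemma Fb_A a b c : a ** (b ** c) = a ** b ** c.
Proof. apply sig_ext. simpl. apply fA. Qed.
Lemma Fb_1l a : sg_one FB ** a = a.
Proof. apply sig_ext. simpl. apply f1l. Qed.
Lemma Fb_1r a : a ** sg_one FB = a.
Proof. apply sig_ext. simpl. apply f1r. Qed.
Lemma Fb_xx a : a ** a = sg_one FB.
Proof. apply sig_ext. destruct a as [a Ha]. simpl. apply sq; auto. Qed.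
Lemma Fb_refl a b : rel a b a b.
Proof. destruct a as [a Ha], b as [b Hb]. simpl. split; [reflexivity| apply self_add; auto]. Qed.
Lemma Fb_sym a b c d : rel a b c d -> rel c d a b.
Proof.
  destruct a as [a Ha], b as [b Hb], c as [c Hc], d as [d Hd]. simpl. intros [E A].
  split; [symmetry; auto| apply (smf_iii F HF a b c d); auto].
Qed.
Lemma Fb_trans a b c d e f : rel a b c d -> rel c d e f -> rel a b e f.
Proof.
  destruct a as [a Ha], b as [b Hb], c as [c Hc], d as [d Hd], e as [e He], f as [f Hf].
  simpl. intros [E1 A1] [E2 A2]. split; [congruence|].
  apply (smf_iv F HF a b c d e f); auto.
Qed.
Lemma Fb_1 a b : rel a b b a.
Proof. destruct a as [a Ha], b as [b Hb]. simpl. split; [apply fC| apply addC, self_add; auto]. Qed.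
Lemma Fb_2 a : rel a (sg_neg FB a) (sg_one FB) (sg_m1 FB).
Proof.
  destruct a as [a Ha]. unfold sg_neg. simpl. split.
  - rewrite negmul, mulneg, sq, f1l; auto.
  - apply (smf_ii F HF). apply one_nz.
Qed.
Lemma Fb_3 a b c d : rel a b c d -> a ** b = c ** d.
Proof.
  destruct a as [a Ha], b as [b Hb], c as [c Hc], d as [d Hd]. simpl. intros [E A].
  apply sig_ext. simpl. exact E.
Qed.
Lemma Fb_4 a b c d : rel a b c d -> rel a (sg_neg FB c) (sg_neg FB b) d.
Proof.
  destruct a as [a Ha], b as [b Hb], c as [c Hc], d as [d Hd]. unfold sg_neg. simpl.
  intros [E A]. rewrite !negmul.
  assert (E' : a * ng c = ng b * d).
  { rewrite mulneg, (fC (ng b) d), mulneg. f_equal. rewrite (fC d b). apply ac_eq; auto. }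
  split; [exact E'|].
  assert (A2 : add a b c) by (apply (smf_iii F HF a b c d); auto).
  apply addrev2 in A2. apply negadd in A2. rewrite negneg in A2.
  apply (smf_iii F HF (ng b) d a (ng c)); auto using nzneg.
Qed.
Lemma Fb_5 g a b c d : rel a b c d -> rel (g**a) (g**b) (g**c) (g**d).
Proof.
  destruct g as [g Hg], a as [a Ha], b as [b Hb], c as [c Hc], d as [d Hd]. simpl.
  intros [E A]. split.
  - rewrite !gg; auto.
  - apply (distr _ _ _ g) in A. rewrite !(fC _ g) in A. exact A.
Qed.
Lemma Fb_v a b c d : sg_rel3 FB a b (b**a) c d (d**c) -> sg_rel3 FB b a (a**b) c d (d**c).
Proof.
  destruct a as [a Ha], b as [b Hb], c as [c Hc], d as [d Hd].
  intros ([x Hx]&[y Hy]&[z Hz]&H1&H2&H3). simpl in *.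
  destruct H1 as [E1 A1], H2 as [E2 A2], H3 as [E3 A3].
  rewrite fK in E2, E3; auto.
  destruct (smf_v F HF a b c d Ha Hb Hc Hd) as (t&v&w&Ht&Hv&Hw&F1&F2&F3&B1&B2&B3).
  { exists x, y, z. repeat split; auto. }
  exists (exist _ t Ht), (exist _ v Hv), (exist _ w Hw). simpl.
  repeat split; auto; rewrite fK; auto.
Qed.

Lemma Fb_special : is_special_group FB.
Proof.
  refine (Build_is_special_group _ Fb_A Fb_1l Fb_1r Fb_xx Fb_refl Fb_sym Fb_trans Fb_1 Fb_2
    Fb_3 Fb_4 (fun a b c d g => Fb_5 g a b c d) _).
  intros a1 a2 a3 b1 b2 b3 c1 c2 c3.
  apply (R3trans FB Fb_A Fb_1l Fb_1r Fb_xx Fb_sym Fb_trans Fb_1 Fb_3 Fb_5 Fb_v).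
Qed.
End FbS.
End Raw.

End P5.
Import P5.


Lemma bullet_functor : bullet_is_functor.
Proof.
  split; [|split; [|split]].
  - intros F HF. split; [apply nzF; auto| intro; apply Fb_special; auto].
  - intros F K g HF HK Hg. destruct Hg as [gadd [gneg [g0 [gmul g1]]]].
    assert (Hnz : forall a, a <> mr_zero F -> g a <> mr_zero K).
    { intros a Ha E. apply (one_nz K HK).
      rewrite <- g1, <- (sq F HF a Ha), gmul, E, (f0l K HK). reflexivity. }
    split; [exact Hnz|].
    intros HF' HK' Hnz'. split; [|split].
    + intros [a Ha] [b Hb]. apply sig_ext. simpl. apply gmul.
    + apply sig_ext. simpl. rewrite gneg, g1. reflexivity.
    + intros [a Ha] [b Hb] [c Hc] [d Hd]. simpl. intros [E A].
      split; [rewrite <- !gmul, E; reflexivity| apply gadd; auto].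
  - intros F Hnz x. apply sig_ext. reflexivity.
  - intros. apply sig_ext. reflexivity.
Qed.

Section Eps.
Variable F : MRdata.
Hypothesis HF : is_special_multifield F.
Variable HN : nz_facts F.
Local Notation FB := (Fb F HN).
Local Notation z0 := (mr_zero F).

Definition hF (a : mr_car F) : option (nzcar F) :=
  match excluded_middle_informative (a = z0) with
  | left _ => None
  | right H => Some (exist _ a H)
  end.

Lemma hF_cases a : (a = z0 /\ hF a = None) \/ (exists Ha, hF a = Some (exist _ a Ha)).
Proof.
  unfold hF. destruct (excluded_middle_informative (a = z0)) as [E|N].
  - left; auto.
  - right. exists N. reflexivity.
Qed.
Lemma hF_nz a (Ha : a <> z0) : hF a = Some (exist _ a Ha).
Proof.
  destruct (hF_cases a) as [[E _]|[Ha' E]]; [congruence|]. rewrite E. f_equal. apply sig_ext. reflexivity.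
Qed.
Lemma hF_z : hF z0 = None.
Proof. destruct (hF_cases z0) as [[_ E]|[Ha' E]]; [auto|congruence]. Qed.

Local Notation HG := (Fb_special F HF HN).

Lemma eps_morph : is_mr_morphism (MG FB) F (eps F).
Proof.
  split; [|split; [|split; [|split]]].
  - simpl. intros x y z H. destruct x as [[a Ha]|].
    2:{ apply (proj1 (Ma_0l FB _ _)) in H. subst z. apply add0x; auto. }
    destruct y as [[b Hb]|].
    2:{ apply (proj1 (Ma_0r FB _ _)) in H. subst z. apply addx0; auto. }
    destruct z as [[c Hc]|].
    + apply (proj1 (Ma_SSS FB HG _ _ _)) in H. destruct H as [d [E A]]. simpl in *. exact A.
    + apply (proj1 (Ma_SSN FB _ _)) in H. unfold sg_neg in H. simpl in H.
      injection H; intro E. simpl. rewrite E, negmul; auto. apply addC; auto.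
      apply (smf_ii F HF); auto.
  - intros [[a Ha]|]; simpl.
    + first [apply negmul; auto | symmetry; apply negmul; auto].
    + first [apply neg0; auto | symmetry; apply neg0; auto].
  - reflexivity.
  - intros [[a Ha]|] [[b Hb]|]; simpl; auto.
    + first [apply f0r; auto | symmetry; apply f0r; auto].
    + first [apply f0l; auto | symmetry; apply f0l; auto].
    + first [apply f0l; auto | symmetry; apply f0l; auto].
  - reflexivity.
Qed.

Lemma hF_morph : is_mr_morphism F (MG FB) hF.
Proof.
  split; [|split; [|split; [|split]]].
  - intros a b c H. simpl.
    destruct (hF_cases a) as [[Ea Ha']|[Ha Ea]].
    { subst a. apply (proj1 (add0 F HF _ _)) in H. subst c. rewrite Ha'. apply (proj2 (Ma_0l FB _ _)). reflexivity. }
    destruct (hF_cases b) as [[Eb Hb']|[Hb Eb]].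
    { subst b. apply (addC F HF) in H. apply (proj1 (add0 F HF _ _)) in H. subst c. rewrite Hb'. apply (proj2 (Ma_0r FB _ _)). reflexivity. }
    rewrite Ea, Eb.
    destruct (hF_cases c) as [[Ec Hc']|[Hc Ec]].
    + subst c. rewrite Hc'. apply (proj2 (Ma_SSN FB _ _)). apply sig_ext. unfold sg_neg. simpl.
      apply (add_zero_neg F HF) in H. subst b. rewrite (negmul F HF), (negneg F HF). reflexivity.
    + rewrite Ec. apply (proj2 (Ma_SSS FB HG _ _ _)).
      exists (exist _ (mr_mul F c (mr_mul F a b)) (nzmul F HF _ _ Hc (nzmul F HF _ _ Ha Hb))).
      simpl. split; [rewrite (fK F HF); auto| exact H].
  - intro a. simpl. destruct (hF_cases a) as [[Ea Ha']|[Ha Ea]].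
    + subst a. rewrite (neg0 F HF), Ha'. reflexivity.
    + rewrite Ea, (hF_nz _ (nzneg F HF a Ha)). simpl. f_equal. apply sig_ext. simpl.
      symmetry. apply (negmul F HF).
  - apply hF_z.
  - intros a b. simpl. destruct (hF_cases a) as [[Ea Ha']|[Ha Ea]].
    { subst a. rewrite (f0l F HF), Ha'. destruct (hF b); reflexivity. }
    destruct (hF_cases b) as [[Eb Hb']|[Hb Eb]].
    { subst b. rewrite (f0r F HF), Hb', Ea. reflexivity. }
    rewrite Ea, Eb, (hF_nz _ (nzmul F HF _ _ Ha Hb)). simpl. f_equal. apply sig_ext. reflexivity.
  - simpl. rewrite (hF_nz _ (one_nz F HF)). f_equal. apply sig_ext. reflexivity.
Qed.

End Eps.

Lemma eps_iso : eps_natural_iso.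
Proof.
  intros F HF. split.
  - intro HN. split; [apply eps_morph; auto|].
    exists (hF F). split; [apply hF_morph; auto|split].
    + intros [[a Ha]|]; simpl; [apply hF_nz| apply hF_z].
    + intro y. destruct (hF_cases F y) as [[E H]|[Hy E]]; [rewrite H; simpl; auto| rewrite E; reflexivity].
  - intros K g HK Hg Hnz [x|]; simpl; [reflexivity|].
    destruct Hg as (_&_&g0&_). exact g0.
Qed.

Theorem theorem5p12 :
  M_is_functor /\ bullet_is_functor /\ eta_natural_iso /\ eps_natural_iso.
Proof.
  split; [apply M_functor| split; [apply bullet_functor| split; [apply eta_iso| apply eps_iso]]].
Qed.
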